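(* Let $G$ be a soluble group which is not finitely generated and such that $G\neq\langle K,L\rangle$ for any proper subgroups $K,L$ of $G$. Then $G/[G,G]$ is a quasicyclic $p$-group for some prime $p$.
   Context: A quasicyclic $p$-group is a Prüfer group $C_{p^\infty}$. *)

(* Defs.v *)
From mathcomp Require Import all_boot all_order all_algebra.
From Stdlib Require Import List.
Set Implicit Arguments. Unset Strict Implicit. Unset Printing Implicit Defensive.
Import Order.TTheory GRing.Theory Num.Theory.

Record group_axioms (G : Type) (mul : G -> G -> G) (one : G) (inv : G -> G) : Prop :=
  GroupAxioms {
    mulA : forall x y z, mul x (mul y z) = mul (mul x y) z;
    mul1g : forall x, mul one x = x;
    mulg1 : forall x, mul x one = x;
    mulVg : forall x, mul (inv x) x = one;
    mulgV : forall x, mul x (inv x) = one }.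

Section GroupDefs.
Variables (G : Type) (mul : G -> G -> G) (one : G) (inv : G -> G).

Definition is_subgroup (H : G -> Prop) : Prop :=
  H one /\ (forall x y, H x -> H y -> H (mul x y)) /\ (forall x, H x -> H (inv x)).

Definition gen (A : G -> Prop) : G -> Prop :=
  fun x => forall H, is_subgroup H -> (forall a, A a -> H a) -> H x.

Definition proper_subgroup (H : G -> Prop) : Prop :=
  is_subgroup H /\ exists x, ~ H x.

Definition finitely_generated : Prop :=
  exists l : list G, forall x, gen (fun y => In y l) x.

Definition commg (x y : G) : G := mul (mul (inv x) (inv y)) (mul x y).

Definition commg_sub (H K : G -> Prop) : G -> Prop :=
  gen (fun z => exists h k, H h /\ K k /\ z = commg h k).

Fixpoint derived (n : nat) : G -> Prop :=
  match n with
  | O => fun _ => True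
  | S m => commg_sub (derived m) (derived m)
  end.

Definition soluble : Prop :=
  exists n, forall x, derived n x -> x = one.

Definition rat_is_int (q : rat) : Prop := q \is a Num.int.

(* q + Z lies in the quasicyclic p-group Z[1/p]/Z, inside Q/Z *)
Definition p_adic_frac (p : nat) (q : rat) : Prop :=
  exists n : nat, rat_is_int (q * (p ^ n)%:R).

(* G/[G,G] is isomorphic to the quasicyclic (Pruefer) p-group C_{p^oo},
   realised as Z[1/p]/Z: phi induces (mod Z) an isomorphism of G/[G,G]
   onto Z[1/p]/Z. *)
Definition abelianization_quasicyclic (p : nat) : Prop :=
  exists phi : G -> rat,
    (forall x y, rat_is_int (phi (mul x y) - phi x - phi y)) /\
    (forall x, p_adic_frac p (phi x)) /\
    (forall q, p_adic_frac p q -> exists x, rat_is_int (phi x - q)) /\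
    (forall x, rat_is_int (phi x) <-> derived 1 x).

End GroupDefs.

(* Main.v *)
From HB Require Import structures.
Require Import Defs.
From mathcomp Require Import all_boot all_order all_algebra.
From mathcomp Require Import boolp classical_sets.
From mathcomp Require Import zify ring.
Set Implicit Arguments. Unset Strict Implicit. Unset Printing Implicit Defensive.
Import Order.TTheory GRing.Theory Num.Theory.

Module AbsPart.
Local Open Scope ring_scope.

Section Abs.
Variable A : zmodType.

Definition subgr (H : A -> Prop) := H 0 /\ (forall a b, H a -> H b -> H (a - b)).

Lemma subgrN H a : subgr H -> H a -> H (- a).
Proof. by move=> [H0 HB] Ha; rewrite -sub0r; apply: HB. Qed.

Lemma subgrD H a b : subgr H -> H a -> H b -> H (a + b).
Proof.
move=> sH Ha Hb; rewrite -(opprK b); apply: sH.2 => //; exact: subgrN.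
Qed.

Lemma subgrMn H a n : subgr H -> H a -> H (a *+ n).
Proof.
move=> sH Ha; elim: n => [|n IH]; first by rewrite mulr0n; exact: sH.1.
by rewrite mulrS; apply: subgrD.
Qed.

Lemma subgrMz H a z : subgr H -> H a -> H (a *~ z).
Proof.
move=> sH Ha; case: z => n.
  by rewrite -pmulrn; apply: subgrMn.
by rewrite NegzE mulrNz; apply: subgrN => //; rewrite -pmulrn; apply: subgrMn.
Qed.

Definition cyc (b : A) := fun a => exists z : int, a = b *~ z.

Lemma subgr_cyc b : subgr (cyc b).
Proof.
split; first by exists 0; rewrite mulr0z.
by move=> _ _ [z ->] [w ->]; exists (z - w); rewrite mulrzBr.
Qed.

Lemma subgr0 : subgr (fun a => a = 0).
Proof. by split => // a b -> ->; rewrite subr0. Qed.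

Lemma subgrI H K : subgr H -> subgr K -> subgr (fun a => H a /\ K a).
Proof.
move=> [H0 HB] [K0 KB]; split => // a b [? ?] [? ?]; split; auto.
Qed.

Lemma zorn_avoid (H : A -> Prop) (w : A) : subgr H -> ~ H w ->
  exists M, subgr M /\ (forall h, H h -> M h) /\ ~ M w /\
    (forall a, ~ M a -> exists m z, M m /\ w = m + a *~ z).
Proof.
move=> sH Hw.
pose Ps (B : set A) := (forall a b, B a -> B b -> B (a - b)) /\ ~ B w /\
  (forall h b, H h -> B b -> B (h + b)).
have [M [[MB [Mw MH]] Mmax]] : exists M, Ps M /\ forall B, (M `<` B)%classic -> ~ Ps B.
  apply: Zorn_bigcup => F FP Ftot; split; [|split].
  - move=> a b [X FX Xa] [Y FY Yb].
    have [XY|YX] := Ftot X Y FX FY.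
      by exists Y => //; apply: (FP Y FY).1 => //; apply: XY.
    by exists X => //; apply: (FP X FX).1 => //; apply: YX.
  - by move=> [X FX Xw]; apply: (FP X FX).2.1.
  - by move=> h b Hh [X FX Xb]; exists X => //; apply: (FP X FX).2.2.
have M0 : M 0.
  apply: contrapT => M0; apply: (Mmax H); last first.
    split; first exact: sH.2.
    by split => // h b Hh Hb; apply: subgrD.
  split; first by move=> x Mx; exfalso; apply: M0; rewrite -(subrr x); apply: MB.
  by move=> HM; apply: M0; apply: HM; exact: sH.1.
have sM : subgr M by [].
exists M; split => //; split; first by move=> h Hh; rewrite -(addr0 h); apply: MH.
split => // a Ma; apply: contrapT => Hn.
apply: (Mmax (fun x => exists m z, M m /\ x = m + a *~ z)).
  split; first by move=> x Mx; exists x, 0; rewrite mulr0z addr0.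
  by move=> sub; apply: Ma; apply: sub; exists 0, 1; rewrite add0r mulr1z.
split; last split.
- move=> _ _ [m [z [Mm ->]]] [m' [z' [Mm' ->]]]; exists (m - m'), (z - z').
  by split; [apply: MB | rewrite mulrzBr opprD addrACA].
- by move=> [m [z [Mm ew]]]; apply: Hn; exists m, z.
- move=> h _ Hh [m [z [Mm ->]]]; exists (h + m), z; split; last by rewrite addrA.
  by apply: MH.
Qed.


Lemma subgr_absz H a c : subgr H -> H (a *~ c) -> H (a *+ `|c|%N).
Proof.
move=> sH; case: c => n /=; first by rewrite -pmulrn.
rewrite NegzE mulrNz -pmulrn => Hn; rewrite -(opprK (a *+ n.+1)).
exact: subgrN.
Qed.

Lemma max_tor (M : A -> Prop) w : subgr M -> ~ M w ->
  (forall a, ~ M a -> exists m z, M m /\ w = m + a *~ z) ->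
  forall a, exists n, (0 < n)%N /\ M (a *+ n).
Proof.
move=> sM Mw Mmax a.
have nz c : c != 0 -> M (a *~ c) -> exists n, (0 < n)%N /\ M (a *+ n).
  move=> c0 Mc; exists `|c|%N; split; first by rewrite absz_gt0.
  exact: subgr_absz.
case: (pselect (M a)) => Ma; first by exists 1%N; rewrite mulr1n.
have [m1 [k [Mm1 e1]]] := Mmax a Ma.
have Mk : ~ M (a *~ k).
  by move=> Mk; apply: Mw; rewrite e1; apply: subgrD.
have k0 : k != 0 by apply/eqP => k0; apply: Mk; rewrite k0 mulr0z; exact: sM.1.
case: (pselect (M (a *~ (k * 2)))) => M2.
  by apply: (nz (k * 2)) => //; rewrite mulf_neq0.
have [m2 [j [Mm2 e2]]] := Mmax _ M2.
apply: (nz (k * (1 - 2 * j))).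
  rewrite mulf_neq0 //; apply/eqP => h.
  have : (1 - 2 * j = 0)%R by [].
  lia.
have -> : a *~ (k * (1 - 2 * j)) = m2 - m1.
  have : m1 + a *~ k = m2 + a *~ (k * 2) *~ j by rewrite -e1 -e2.
  rewrite -mulrzA => h.
  rewrite mulrBr mulr1 mulrA mulrzBr -(addKr m1 (a *~ k)) h.
  by rewrite addrA addrK addrC.
by apply: sM.2.
Qed.

Lemma Bez H a m n : subgr H -> H (a *+ m) -> H (a *+ n) -> coprime m n -> H a.
Proof.
move=> sH Hm Hn cmn.
have cz : coprimez m%:Z n%:Z by rewrite coprimezE.
have [[u v] /= e] := elimT (coprimezP m%:Z n%:Z) cz.
have -> : a = (a *+ m) *~ u + (a *+ n) *~ v.
  by rewrite !pmulrn -!mulrzA -mulrzDr (mulrC m%:Z) (mulrC n%:Z) e mulr1z.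
by apply: (@subgrD H) => //; apply: (@subgrMz H).
Qed.


Definition cover_prop := forall H K, subgr H -> subgr K ->
  (forall a, exists h k, H h /\ K k /\ a = h + k) -> (forall a, H a) \/ (forall a, K a).

Lemma C_lemma (HP : cover_prop) C q : subgr C -> prime q ->
  (forall a, exists n, (0 < n)%N /\ C (a *+ n)) ->
  (forall a, exists k, C (a *+ q ^ k)) \/
  (forall a, exists n, (0 < n)%N /\ coprime n q /\ C (a *+ n)).
Proof.
move=> sC pq tor; apply: HP.
- split; first by exists 0%N; rewrite mul0rn; exact: sC.1.
  move=> a b [k Ck] [l Cl]; exists (k + l)%N.
  rewrite mulrnBl expnD.
  apply: sC.2; first by rewrite mulrnA; apply: subgrMn.
  by rewrite mulnC mulrnA; apply: subgrMn.
- split; first by exists 1%N; rewrite mul0rn; split => //; split; [exact: coprime1n | exact: sC.1].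
  move=> a b [n [n0 [cn Cn]]] [m [m0 [cm Cm]]]; exists (n * m)%N.
  split; first by rewrite muln_gt0 n0.
  split; first by rewrite coprimeMl cn.
  rewrite mulrnBl; apply: sC.2; first by rewrite mulrnA; apply: subgrMn.
  by rewrite mulnC mulrnA; apply: subgrMn.
- move=> a; have [N [N0 CN]] := tor a.
  have [m cqm eN] := pfactor_coprime pq N0.
  set k := logn q N in eN.
  have cz : coprimez (q ^ k)%N%:Z m%:Z.
    by rewrite coprimezE /= coprimeXl // coprime_sym.
  have [[u v] /= e] := elimT (coprimezP _ _) cz.
  exists ((a *+ m) *~ v), ((a *+ q ^ k) *~ u); split; last split.
  + exists k; have -> : (a *+ m) *~ v *+ q ^ k = (a *+ N) *~ v.
      by rewrite eN !pmulrn -!mulrzA; congr (_ *~ _); rewrite PoszM; ring.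
    exact: (@subgrMz C).
  + exists m; split; first by move: N0; rewrite eN muln_gt0 => /andP[].
    split; first by rewrite coprime_sym.
    have -> : (a *+ q ^ k) *~ u *+ m = (a *+ N) *~ u.
      by rewrite eN !pmulrn -!mulrzA; congr (_ *~ _); rewrite PoszM; ring.
    exact: (@subgrMz C).
  + by rewrite !pmulrn -!mulrzA addrC -mulrzDr (mulrC (q ^ k)%N%:Z) (mulrC m%:Z) e mulr1z.
Qed.


Lemma tor_all (HP : cover_prop) (y : A) : exists n, (0 < n)%N /\ y *+ n = 0.
Proof.
apply: contrapT => Hn.
have inf n : (0 < n)%N -> y *+ n <> 0 by move=> n0 e; apply: Hn; exists n.
have avoid q : (1 < q)%N -> ~ cyc (y *+ q) y.
  move=> q1 [z ez].
  have e0 : y *~ (q%:Z * z - 1) = 0.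
    by rewrite mulrzBr mulr1z mulrzA -pmulrn -ez subrr.
  have c0 : (q%:Z * z - 1) != 0.
    apply/eqP => h; have : (q%:Z * z = 1)%R by apply/eqP; rewrite -subr_eq0 h.
    move=> /(congr1 absz); rewrite abszM /= => /eqP; rewrite muln_eq1.
    by move=> /andP[/eqP q1' _]; move: q1; rewrite q1'.
  have := inf (absz (q%:Z * z - 1)%R); apply; first by rewrite absz_gt0.
  by apply: (@subgr_absz (fun a => a = 0)) => //; exact: subgr0.
have [K1 [sK1 [HK1 [K1y maxK1]]]] := zorn_avoid (subgr_cyc (y *+ 2)) (avoid 2%N isT).
have [K2 [sK2 [HK2 [K2y maxK2]]]] := zorn_avoid (subgr_cyc (y *+ 3)) (avoid 3%N isT).
have tK1 := max_tor sK1 K1y maxK1.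
have tK2 := max_tor sK2 K2y maxK2.
have sC := subgrI sK1 sK2.
have tC : forall a, exists n, (0 < n)%N /\ (K1 (a *+ n) /\ K2 (a *+ n)).
  move=> a; have [n1 [n10 C1]] := tK1 a; have [n2 [n20 C2]] := tK2 a.
  exists (n1 * n2)%N; split; first by rewrite muln_gt0 n10.
  split; first by rewrite mulrnA; apply: subgrMn.
  by rewrite mulnC mulrnA; apply: subgrMn.
have K1y2 : K1 (y *+ 2) by apply: HK1; exists 1; rewrite mulr1z.
have K2y3 : K2 (y *+ 3) by apply: HK2; exists 1; rewrite mulr1z.
case: (C_lemma HP sC (isT : prime 2) tC) => h.
- have [k [_ Ck]] := h y; apply: K2y; apply: (Bez sK2 Ck K2y3).
  by rewrite coprimeXl.
- have [n [_ [cn [Cn _]]]] := h y; apply: K1y; exact: (Bez sK1 Cn K1y2 cn).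
Qed.


Lemma exists_p (HP : cover_prop) (NT : exists a : A, a <> 0) :
  exists p (x1 : A), prime p /\ x1 <> 0 /\ x1 *+ p = 0 /\
    (forall a : A, exists k, a *+ p ^ k = 0).
Proof.
case: NT => a a0.
have ex : exists n, (0 < n)%N && (a *+ n == 0).
  by have [n [n0 e]] := tor_all HP a; exists n; rewrite n0 e eqxx.
case: (ex_minnP ex) => n /andP[n0 /eqP an] nmin.
have n1 : (1 < n)%N.
  by case: n n0 an {nmin} => [|[|n]] //= _; rewrite mulr1n.
have pp : prime (pdiv n) := pdiv_prime n1.
have pn : (pdiv n %| n)%N := pdiv_dvd n.
have x1p : a *+ (n %/ pdiv n) *+ pdiv n = 0 by rewrite -mulrnA divnK.
have x10 : a *+ (n %/ pdiv n) <> 0.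
  move=> e; have := nmin (n %/ pdiv n)%N.
  rewrite divn_gt0 ?prime_gt0 // (dvdn_leq n0 pn) e eqxx => /(_ isT).
  by rewrite leqNgt ltn_Pdiv ?prime_gt1.
exists (pdiv n), (a *+ (n %/ pdiv n)); split => //; split => //; split => //.
have tor0 : forall b : A, exists m, (0 < m)%N /\ b *+ m = 0 by apply: tor_all.
case: (C_lemma HP subgr0 pp tor0) => // h; exfalso.
have [m [_ [cm Cm]]] := h (a *+ (n %/ pdiv n)).
by apply: x10; apply: (Bez subgr0 Cm x1p cm).
Qed.


Definition pmulset p := fun c : A => exists b, c = b *+ p.

Lemma subgr_pmul p : subgr (pmulset p).
Proof.
split; first by exists 0; rewrite mul0rn.
by move=> _ _ [b ->] [b' ->]; exists (b - b'); rewrite mulrnBl.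
Qed.

Lemma pdiv_all (HP : cover_prop) (NC : forall x : A, exists a, ~ cyc x a) p :
  prime p -> forall a : A, exists b, a = b *+ p.
Proof.
move=> pp x; apply: contrapT => Hx.
have [M [sM [HM [Mx maxM]]]] := zorn_avoid (subgr_pmul p) Hx.
have cov : forall a, exists m k, M m /\ cyc x k /\ a = m + k.
  move=> a; case: (pselect (M a)) => Ma.
    by exists a, 0; split => //; split; [exists 0; rewrite mulr0z | rewrite addr0].
  have [m [k [Mm e]]] := maxM a Ma.
  case: (boolP (p%:Z %| k)%Z) => pk.
    exfalso; apply: Mx; rewrite e; apply: subgrD => //.
    rewrite -(divzK pk) mulrzA -pmulrn; apply: HM; by exists (a *~ (k %/ p)%Z).
  have ck : coprimez k p%:Z.
    by rewrite coprimezE coprime_sym prime_coprime // -dvdzE.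
  have [[u v] /= euv] := elimT (coprimezP _ _) ck.
  exists ((a *+ p) *~ v - m *~ u), (x *~ u); split.
    apply: sM.2; first by apply: (@subgrMz M) => //; apply: HM; exists a.
    exact: (@subgrMz M).
  split; first by exists u.
  rewrite e mulrzDl addrA subrK pmulrn -!mulrzA -mulrzDr.
  by rewrite (mulrC p%:Z) (mulrC k) addrC euv mulr1z.
case: (HP _ _ sM (subgr_cyc x) cov) => h; first by apply: Mx.
by have [a na] := NC x; apply: na.
Qed.


Section Tower.
Variables (p : nat) (x1 : A) (g : A -> A).
Hypothesis hg : forall a, g a *+ p = a.

Lemma iter_lift n k : iter n g x1 = iter (k + n) g x1 *+ p ^ k.
Proof.
elim: k => [|k IH]; first by rewrite expn0 mulr1n.
by rewrite IH addSn iterS expnS mulrnA hg.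
Qed.

Definition Dset := fun a : A => exists n z, a = iter n g x1 *~ z.

Lemma Dset_lvl n z m : Dset (iter n g x1 *~ z) ->
  iter n g x1 *~ z = iter (m + n) g x1 *~ (z * (p ^ m)%N%:Z).
Proof. by move=> _; rewrite (iter_lift n m) pmulrn -mulrzA mulrC. Qed.

Lemma subgr_D : subgr Dset.
Proof.
split; first by exists 0%N, 0; rewrite mulr0z.
move=> _ _ [n [z ->]] [m [w ->]]; exists (m + n)%N, (z * (p ^ m)%N%:Z - w * (p ^ n)%N%:Z).
rewrite mulrzBr (iter_lift n m) (iter_lift m n) (addnC n m) !pmulrn -!mulrzA.
by rewrite (mulrC (p ^ m)%N%:Z) (mulrC (p ^ n)%N%:Z).
Qed.

Lemma D_all (HP : cover_prop) (pp : prime p) (x10 : x1 <> 0)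
  (pg : forall a : A, exists k, a *+ p ^ k = 0) : forall a, Dset a.
Proof.
have [K [sK [_ [Kx maxK]]]] := zorn_avoid subgr0 x10.
pose DK a := exists d k, Dset d /\ K k /\ a = d + k.
have step a : DK (a *+ p) -> DK a.
  move=> [d [k0 [[n [z ed]] [Kk0 e]]]].
  pose d' := iter n.+1 g x1 *~ z.
  have d'p : d' *+ p = d by rewrite /d' pmulrn -mulrzA mulrC mulrzA -pmulrn hg ed.
  have a'p : (a - d') *+ p = k0 by rewrite mulrnBl d'p e addrAC subrr add0r.
  have Dd' : Dset d' by exists n.+1, z.
  case: (pselect (K (a - d'))) => Ka'.
    by exists d', (a - d'); split => //; split => //; rewrite addrC subrK.
  have [m [j [Km ex1]]] := maxK _ Ka'.
  case: (boolP (p%:Z %| j)%Z) => pj.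
    exfalso; apply: Kx; rewrite ex1; apply: subgrD => //.
    rewrite -(divzK pj) mulrC mulrzA -pmulrn a'p; exact: (@subgrMz K).
  have cj : coprimez j p%:Z.
    by rewrite coprimezE coprime_sym prime_coprime // -dvdzE.
  have [[u v] /= euv] := elimT (coprimezP _ _) cj.
  have ea' : a - d' = (x1 - m) *~ u + k0 *~ v.
    rewrite ex1 addrAC subrr add0r -a'p pmulrn -!mulrzA -mulrzDr.
    by rewrite (mulrC j) (mulrC p%:Z) euv mulr1z.
  exists (d' + x1 *~ u), (k0 *~ v - m *~ u); split.
    by apply: (@subgrD Dset) => //; [exact: subgr_D | exists 0%N, u].
  split; first by apply: sK.2; apply: (@subgrMz K).
  rewrite -[a](subrK d') ea' mulrzBl.
  by rewrite addrC !addrA [LHS]addrAC.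
have cov : forall a, DK a.
  move=> a; have [k ek] := pg a.
  elim: k a ek => [|k IH] a ek.
    by exists 0, 0; split; [exists 0%N, 0; rewrite mulr0z | split; [exact: sK.1 | move: ek; rewrite expn0 mulr1n => ->; rewrite addr0]].
  apply: step; apply: IH; by rewrite -mulrnA -expnS.
case: (HP _ _ subgr_D sK cov) => h; first exact: h.
by exfalso; apply: Kx; apply: h.
Qed.


Hypotheses (pp : prime p) (x10 : x1 <> 0) (x1p : x1 *+ p = 0).

Lemma y_pn n : iter n g x1 *+ p ^ n = x1.
Proof. by have := iter_lift 0 n; rewrite addn0 /= => <-. Qed.

Lemma y_ord n z : iter n g x1 *~ z = 0 -> ((p ^ n.+1)%N%:Z %| z)%Z.
Proof.
move=> h; set y := iter n g x1 in h *.
have yP : y *~ (p ^ n.+1)%N%:Z = 0.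
  by rewrite -pmulrn expnSr mulrnA y_pn.
have [u [v e]] := Bezoutz z (p ^ n.+1)%N%:Z.
have yg : y *~ gcdz z (p ^ n.+1)%N%:Z = 0.
  by rewrite -e mulrzDr (mulrC u) (mulrC v) !mulrzA h yP !mul0rz addr0.
apply/gcdz_idPr; move: yg; rewrite /gcdz /=.
have := dvdn_gcdr `|z|%N (p ^ n.+1); case/(dvdn_pfactor _ _ pp) => j jle ->.
case: (ltnP j n.+1) => jn; last by have -> : j = n.+1 by apply/eqP; rewrite eqn_leq jle.
move=> yj; exfalso; apply: x10; rewrite -(y_pn n) -/y.
have -> : (p ^ n = p ^ j * p ^ (n - j))%N by rewrite -expnD subnKC.
by rewrite mulrnA [y *+ _]pmulrn yj mul0rn.
Qed.

Lemma y_ordE n z : ((p ^ n.+1)%N%:Z %| z)%Z -> iter n g x1 *~ z = 0.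
Proof.
move=> /divzK <-; rewrite mulrC mulrzA -pmulrn expnSr mulrnA y_pn x1p.
by rewrite mul0rz.
Qed.


Lemma intr_natr (n : nat) : ((n%:Z)%:~R : rat) = n%:R.
Proof. by []. Qed.

Definition ratof (n : nat) (z : int) : rat := z%:~R / ((p ^ n.+1)%N%:R).

Lemma P0 : (p%:R : rat) != 0.
Proof. by rewrite pnatr_eq0 -lt0n prime_gt0. Qed.

Lemma rep_eq n z m w : iter n g x1 *~ z = iter m g x1 *~ w ->
  ratof n z - ratof m w \is a Num.int.
Proof.
move=> e.
have e0 : iter (m + n) g x1 *~ (z * (p ^ m)%N%:Z - w * (p ^ n)%N%:Z) = 0.
  have L1 : iter (m + n) g x1 *~ (z * (p ^ m)%N%:Z) = iter n g x1 *~ z.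
    by rewrite mulrC mulrzA -pmulrn -iter_lift.
  have L2 : iter (m + n) g x1 *~ (w * (p ^ n)%N%:Z) = iter m g x1 *~ w.
    by rewrite addnC mulrC mulrzA -pmulrn -iter_lift.
  by rewrite mulrzBr L1 L2 e subrr.
have /divzK ec := y_ord e0.
set c := ((z * _ - _) %/ _)%Z in ec.
have ecr : (z%:~R * (p%:R : rat) ^+ m - w%:~R * p%:R ^+ n) = c%:~R * p%:R ^+ (m + n).+1.
  have := congr1 (fun t : int => (t%:~R : rat)) ec.
  by rewrite /= intrB !intrM /= -!natrX => <-.
rewrite /ratof !natrX.
have -> : z%:~R / (p%:R : rat) ^+ n.+1 - w%:~R / p%:R ^+ m.+1 = c%:~R.
  move: ecr; rewrite !exprS exprD => ecr.
  have Pn : (p%:R : rat) ^+ n != 0 by rewrite expf_neq0 // P0.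
  have Pm : (p%:R : rat) ^+ m != 0 by rewrite expf_neq0 // P0.
  have P' := P0.
  apply: (@mulIf _ ((p%:R : rat) * (p%:R ^+ m * p%:R ^+ n))).
    by rewrite !mulf_neq0.
  rewrite -ecr; field.
  by rewrite P' Pn Pm.
exact: intr_int.
Qed.


Lemma ratof_lift n z m : ratof (m + n) (z * (p ^ m)%N%:Z) = ratof n z.
Proof.
rewrite /ratof intrM /= intr_natr !natrX !exprS exprD.
have Pn : (p%:R : rat) ^+ n != 0 by rewrite expf_neq0 // P0.
have Pm : (p%:R : rat) ^+ m != 0 by rewrite expf_neq0 // P0.
have P' := P0.
by field; rewrite P' Pn Pm.
Qed.

Hypothesis Dall : forall a, Dset a.

Definition lvl a := sval (cid (Dall a)).
Definition coef a := sval (cid (svalP (cid (Dall a)))).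
Lemma rep_spec a : a = iter (lvl a) g x1 *~ coef a.
Proof. exact: (svalP (cid (svalP (cid (Dall a))))). Qed.

Definition phi a := ratof (lvl a) (coef a).

Lemma phi_rep a n z : a = iter n g x1 *~ z -> phi a - ratof n z \is a Num.int.
Proof. by move=> e; apply: rep_eq; rewrite -rep_spec -e. Qed.

Lemma phi_add a b : phi (a + b) - phi a - phi b \is a Num.int.
Proof.
set n := lvl a; set z := coef a; set m := lvl b; set w := coef b.
have L1 : iter (m + n) g x1 *~ (z * (p ^ m)%N%:Z) = a.
  by rewrite mulrC mulrzA -pmulrn -iter_lift [RHS]rep_spec.
have L2 : iter (m + n) g x1 *~ (w * (p ^ n)%N%:Z) = b.
  by rewrite addnC mulrC mulrzA -pmulrn -iter_lift [RHS]rep_spec.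
have := @phi_rep (a + b) (m + n) (z * (p ^ m)%N%:Z + w * (p ^ n)%N%:Z).
rewrite mulrzDr L1 L2 => /(_ erefl).
suff -> : ratof (m + n) (z * (p ^ m)%N%:Z + w * (p ^ n)%N%:Z) = phi a + phi b.
  by rewrite opprD addrA.
rewrite /ratof intrD mulrDl -!/(ratof _ _) ratof_lift addnC ratof_lift.
by [].
Qed.

Lemma phi_padic a : exists k, phi a * (p ^ k)%:R \is a Num.int.
Proof.
exists (lvl a).+1; rewrite /phi /ratof mulfVK ?intr_int //.
by rewrite pnatr_eq0 expn_eq0 negb_and -lt0n prime_gt0.
Qed.

Lemma phi_surj q : (exists k, q * (p ^ k)%:R \is a Num.int) ->
  exists a, phi a - q \is a Num.int.
Proof.
case=> k /intrP [c ec].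
exists (iter k g x1 *~ (c * p%:Z)).
suff -> : q = ratof k (c * p%:Z) by apply: phi_rep.
rewrite /ratof intrM /= intr_natr -ec expnS natrM.
have Pk : ((p ^ k)%N%:R : rat) != 0.
  by rewrite pnatr_eq0 expn_eq0 negb_and -lt0n prime_gt0.
have P' := P0.
by field; rewrite P' Pk.
Qed.

Lemma phi_ker a : phi a \is a Num.int <-> a = 0.
Proof.
split.
  move=> ha; rewrite [a]rep_spec; apply: y_ordE.
  move: ha; rewrite /phi /ratof => /intrP [c ec].
  apply/dvdzP; exists c; apply: (@intr_inj rat).
  rewrite intrM /= -ec mulfVK //.
  by rewrite pnatr_eq0 expn_eq0 negb_and -lt0n prime_gt0.
move=> a0; have := @phi_rep a 0%N 0; rewrite mulr0z => /(_ a0).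
by rewrite /ratof mul0r subr0.
Qed.

End Tower.

End Abs.

Theorem abs_main (A : zmodType) (HP : cover_prop A)
  (NC : forall x : A, exists a, ~ cyc x a) (NT : exists a : A, a <> 0) :
  exists p (phi : A -> rat), prime p /\
    (forall a b, phi (a + b) - phi a - phi b \is a Num.int) /\
    (forall a, exists k, phi a * (p ^ k)%:R \is a Num.int) /\
    (forall q, (exists k, q * (p ^ k)%:R \is a Num.int) -> exists a, phi a - q \is a Num.int) /\
    (forall a, phi a \is a Num.int <-> a = 0).
Proof.
have [p [x1 [pp [x10 [x1p pg]]]]] := exists_p HP NT.
have hdiv := pdiv_all HP NC pp.
pose g a := sval (cid (hdiv a)).
have hg : forall a, g a *+ p = a by move=> a; rewrite /g; case: cid.
have Dall := D_all hg HP pp x10 pg.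
exists p, (phi p Dall); split => //; split; first exact: (phi_add hg pp x10 x1p).
split; first exact: phi_padic.
split; first exact: (phi_surj hg pp x10 x1p).
exact: (phi_ker hg pp x10 x1p).
Qed.

End AbsPart.
Import AbsPart.

Section Grp.
Variables (G : Type) (mul : G -> G -> G) (one : G) (inv : G -> G).
Hypothesis HG : group_axioms mul one inv.

Let mA x y z : mul x (mul y z) = mul (mul x y) z := Defs.mulA HG x y z.
Let m1g x : mul one x = x := Defs.mul1g HG x.
Let mg1 x : mul x one = x := Defs.mulg1 HG x.
Let mVg x : mul (inv x) x = one := Defs.mulVg HG x.
Let mgV x : mul x (inv x) = one := Defs.mulgV HG x.

Lemma mulKg x y : mul (inv x) (mul x y) = y.
Proof. by rewrite mA mVg m1g. Qed.
Lemma mulKVg x y : mul x (mul (inv x) y) = y.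
Proof. by rewrite mA mgV m1g. Qed.
Lemma mulgK x y : mul (mul y x) (inv x) = y.
Proof. by rewrite -mA mgV mg1. Qed.
Lemma mulgKV x y : mul (mul y (inv x)) x = y.
Proof. by rewrite -mA mVg mg1. Qed.
Lemma mulg_injl x y z : mul x y = mul x z -> y = z.
Proof. by move=> e; rewrite -(mulKg x y) e mulKg. Qed.
Lemma invg_uniq x y : mul x y = one -> y = inv x.
Proof. by move=> e; apply: (@mulg_injl x); rewrite e mgV. Qed.
Lemma invgK x : inv (inv x) = x.
Proof. by symmetry; apply: invg_uniq; rewrite mVg. Qed.
Lemma invgM x y : inv (mul x y) = mul (inv y) (inv x).
Proof.
by symmetry; apply: invg_uniq; rewrite -mA (mA y) mgV m1g mgV.
Qed.
Lemma invg1 : inv one = one.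
Proof. by symmetry; apply: invg_uniq; rewrite m1g. Qed.

Local Notation sgrp := (is_subgroup mul one inv).
Local Notation gen := (gen mul one inv).

Lemma gen_sgrp A : sgrp (gen A).
Proof.
split; first by move=> H [H1 _].
split; first by move=> x y gx gy H sH AH; apply: sH.2.1; [apply: gx | apply: gy].
by move=> x gx H sH AH; apply: sH.2.2; apply: gx.
Qed.

Lemma gen_in (A : G -> Prop) a : A a -> gen A a.
Proof. by move=> Aa H _ AH; apply: AH. Qed.

Lemma sgrp_mulV H x y : sgrp H -> H x -> H y -> H (mul x (inv y)).
Proof. by move=> [_ [HM HV]] hx hy; apply: HM => //; apply: HV. Qed.

Definition N := derived mul one inv 1.

Lemma sgN : sgrp N.
Proof. exact: gen_sgrp. Qed.

Lemma commN h k : N (Defs.commg mul inv h k).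
Proof. by apply: gen_in; exists h, k. Qed.

Lemma normN g x : N x -> N (mul (inv g) (mul x g)).
Proof.
move=> Nx; pose cj y := mul (inv g) (mul y g).
have cjM y z : cj (mul y z) = mul (cj y) (cj z).
  by rewrite /cj -!mA mulKVg.
have cjV y : cj (inv y) = inv (cj y).
  by rewrite /cj !invgM invgK mA.
apply: (Nx (fun y => N (cj y))).
  split; first by rewrite /cj m1g mVg; exact: sgN.1.
  split; first by move=> y z ny nz; rewrite cjM; apply: sgN.2.1.
  by move=> y ny; rewrite cjV; apply: sgN.2.2.
move=> _ [h [k [_ [_ ->]]]].
rewrite /Defs.commg !cjM !cjV; exact: commN.
Qed.

Definition R x y := N (mul (inv x) y).

Lemma R_refl x : R x x.
Proof. by rewrite /R mVg; exact: sgN.1. Qed.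
Lemma R_sym x y : R x y -> R y x.
Proof. by move=> r; have := sgN.2.2 _ r; rewrite invgM invgK. Qed.
Lemma R_trans x y z : R x y -> R y z -> R x z.
Proof.
move=> r1 r2; have := sgN.2.1 _ _ r1 r2.
by rewrite -mA mulKVg.
Qed.
Lemma R_mul x x' y y' : R x x' -> R y y' -> R (mul x y) (mul x' y').
Proof.
move=> r1 r2; have := sgN.2.1 _ _ (normN y r1) r2.
by rewrite /R invgM -!mA mulKVg.
Qed.
Lemma R_inv x x' : R x x' -> R (inv x) (inv x').
Proof.
move=> r; have := normN (inv x') (sgN.2.2 _ r).
by rewrite /R !invgM !invgK -!mA mulKVg.
Qed.
Lemma R_comm x y : R (mul x y) (mul y x).
Proof.
rewrite /R invgM; have := commN y x; rewrite /Defs.commg.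
by rewrite -!mA.
Qed.

End Grp.

Definition Q G (mul : G -> G -> G) one inv (HG : group_axioms mul one inv) : Type :=
  {S : G -> Prop | exists x, S = R mul one inv x}.

HB.instance Definition _ G mul one inv HG := gen_eqMixin (@Q G mul one inv HG).
HB.instance Definition _ G mul one inv HG := gen_choiceMixin (@Q G mul one inv HG).

Section QS.
Variables (G : Type) (mul : G -> G -> G) (one : G) (inv : G -> G).
Hypothesis HG : group_axioms mul one inv.
Local Notation QT := (Q HG).
Local Notation R := (R mul one inv).

Let mA x y z : mul x (mul y z) = mul (mul x y) z := Defs.mulA HG x y z.
Let m1g x : mul one x = x := Defs.mul1g HG x.
Let mVg x : mul (inv x) x = one := Defs.mulVg HG x.

Definition pi x : QT := exist _ (R x) (ex_intro _ x erefl).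

Lemma Qeq (a b : QT) : sval a = sval b -> a = b.
Proof.
case: a b => [S PS] [T PT] /= e; subst T.
by rewrite (Prop_irrelevance PS PT).
Qed.

Lemma piP x y : pi x = pi y <-> R x y.
Proof.
split.
  move=> /(congr1 sval) /= e; rewrite e; exact: R_refl.
move=> r; apply: Qeq => /=; apply: funext => z; apply: propext; split.
  by move=> r2; apply: (R_trans HG) (R_sym HG r) r2.
by move=> r2; apply: (R_trans HG) r r2.
Qed.

Lemma pi_surj (a : QT) : exists x, a = pi x.
Proof.
case: a => S [x ex]; exists x; apply: Qeq => /=; exact: ex.
Qed.

Definition rep (a : QT) : G := sval (cid (svalP a)).

Lemma piK a : pi (rep a) = a.
Proof.
apply: Qeq => /=; rewrite /rep; case: cid => x /= ->; by [].
Qed.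

Lemma rep_R x : R (rep (pi x)) x.
Proof. by apply/piP; rewrite piK. Qed.

Definition qadd a b := pi (mul (rep a) (rep b)).
Definition qopp a := pi (inv (rep a)).
Definition qzero := pi one.

Lemma qaddE x y : qadd (pi x) (pi y) = pi (mul x y).
Proof. by apply/piP; apply: (R_mul HG); apply: rep_R. Qed.

Lemma qoppE x : qopp (pi x) = pi (inv x).
Proof. by apply/piP; apply: (R_inv HG); apply: rep_R. Qed.

Lemma qaddA : associative qadd.
Proof.
move=> a b c; have [x ->] := pi_surj a; have [y ->] := pi_surj b.
have [z ->] := pi_surj c; by rewrite !qaddE mA.
Qed.

Lemma qaddC : commutative qadd.
Proof.
move=> a b; have [x ->] := pi_surj a; have [y ->] := pi_surj b.
by rewrite !qaddE; apply/piP; apply: R_comm.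
Qed.

Lemma qadd0 : left_id qzero qadd.
Proof. by move=> a; have [x ->] := pi_surj a; rewrite /qzero qaddE m1g. Qed.

Lemma qaddN : left_inverse qzero qopp qadd.
Proof. by move=> a; have [x ->] := pi_surj a; rewrite qoppE qaddE mVg. Qed.

End QS.

HB.instance Definition _ G mul one inv HG :=
  GRing.isZmodule.Build (@Q G mul one inv HG) (@qaddA G mul one inv HG)
    (@qaddC G mul one inv HG) (@qadd0 G mul one inv HG) (@qaddN G mul one inv HG).

Section Main.
Variables (G : Type) (mul : G -> G -> G) (one : G) (inv : G -> G).
Hypothesis HG : group_axioms mul one inv.
Local Notation A := (Q HG).
Local Notation N := (N mul one inv).
Local Notation R := (R mul one inv).
Local Notation pi := (pi HG).
Local Notation sgrp := (is_subgroup mul one inv).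
Local Notation gen := (gen mul one inv).

Let mA x y z : mul x (mul y z) = mul (mul x y) z := Defs.mulA HG x y z.
Let m1g x : mul one x = x := Defs.mul1g HG x.
Let mg1 x : mul x one = x := Defs.mulg1 HG x.
Let mVg x : mul (inv x) x = one := Defs.mulVg HG x.
Let mgV x : mul x (inv x) = one := Defs.mulgV HG x.

Lemma piD x y : pi (mul x y) = (pi x + pi y)%R.
Proof. symmetry; exact: qaddE. Qed.

Lemma pi1 : pi one = 0%R.
Proof. by []. Qed.

Lemma piV x : pi (inv x) = (- pi x)%R.
Proof. symmetry; exact: qoppE. Qed.

Lemma pi0 x : pi x = 0%R <-> N x.
Proof.
rewrite -pi1; have := piP HG one x; rewrite /R (invg1 HG) m1g => h.
by split => [e|nx]; [apply/h | apply/esym/h].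
Qed.


Lemma Sfill (S : G -> Prop) s x : sgrp S -> (forall n, N n -> S n) -> S s ->
  pi s = pi x -> S x.
Proof.
move=> sS SN Ss /(piP HG) r; rewrite -(mulKVg HG s x).
by apply: sS.2.1 => //; apply: SN.
Qed.

Lemma gen_mono (B C : G -> Prop) x : (forall y, B y -> C y) -> gen B x -> gen C x.
Proof. by move=> BC gx H sH CH; apply: gx => // y By; apply: CH; apply: BC. Qed.

Lemma Nproper : soluble mul one inv -> ~ finitely_generated mul one inv ->
  exists x, ~ N x.
Proof.
move=> [n hn] nfg; apply: contrapT => hN; apply: nfg; exists nil => x.
have allN : forall y, N y by move=> y; apply: contrapT => ny; apply: hN; exists y.
have dall : forall m y, derived mul one inv m y.
  elim=> [|m IH] y //=.
  apply: (gen_mono (B := fun z => exists h k, True /\ True /\ z = Defs.commg mul inv h k)).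
    by move=> _ [h [k [_ [_ ->]]]]; exists h, k.
  exact: allN.
rewrite (hn x (dall n x)) => H sH _; exact: sH.1.
Qed.

Lemma pre_sgrp (H : A -> Prop) : AbsPart.subgr H -> sgrp (fun x => H (pi x)).
Proof.
move=> sH; split; first by rewrite pi1; exact: sH.1.
split; first by move=> x y hx hy; rewrite piD; apply: AbsPart.subgrD.
by move=> x hx; rewrite piV; apply: AbsPart.subgrN.
Qed.


Lemma pre_proper (H : A -> Prop) : AbsPart.subgr H -> ~ (forall a, H a) ->
  proper_subgroup mul one inv (fun x => H (pi x)).
Proof.
move=> sH hH; split; first exact: pre_sgrp.
have [a na] : exists a, ~ H a.
  by apply: contrapT => c; apply: hH => a; apply: contrapT => na; apply: c; exists a.
by have [x ex] := pi_surj a; exists x; rewrite -ex.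
Qed.

Lemma QHP (Hgen : forall K L : G -> Prop,
      proper_subgroup mul one inv K -> proper_subgroup mul one inv L ->
      ~ (forall x, gen (fun y => K y \/ L y) x)) : AbsPart.cover_prop A.
Proof.
move=> H K sH sK cov.
case: (pselect (forall a, H a)) => hH; first by left.
case: (pselect (forall a, K a)) => hK; first by right.
exfalso; apply: (Hgen _ _ (pre_proper sH hH) (pre_proper sK hK)) => x.
have sS : sgrp (gen (fun y => H (pi y) \/ K (pi y))) by apply: gen_sgrp.
have [h [k [Hh [Kk e]]]] := cov (pi x).
have [y ey] := pi_surj h; have [z ez] := pi_surj k.
apply: (@Sfill _ (mul y z)) => //.
- move=> n /pi0 n0; apply: gen_in; left; rewrite n0; exact: sH.1.
- by apply: sS.2.1; apply: gen_in; [left; rewrite -ey | right; rewrite -ez].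
- by rewrite piD -ey -ez e.
Qed.

Lemma QNC (Hsol : soluble mul one inv) (Hnfg : ~ finitely_generated mul one inv)
  (Hgen : forall K L : G -> Prop,
      proper_subgroup mul one inv K -> proper_subgroup mul one inv L ->
      ~ (forall x, gen (fun y => K y \/ L y) x)) :
  forall a : A, exists b, ~ AbsPart.cyc a b.
Proof.
move=> a; apply: contrapT => hc.
have allc : forall b, AbsPart.cyc a b.
  by move=> b; apply: contrapT => nb; apply: hc; exists b.
have [g eg] := pi_surj a.
pose K := gen (fun y => y = g).
have sK : sgrp K by apply: gen_sgrp.
have [x0 nx0] := Nproper Hsol Hnfg.
have pN : proper_subgroup mul one inv N by split; [exact: sgN | exists x0].
have pK : proper_subgroup mul one inv K.
  split => //; apply: contrapT => hK; apply: Hnfg; exists [:: g] => x.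
  have Kx : K x by apply: contrapT => nK; apply: hK; exists x.
  by apply: (gen_mono _ Kx) => y ->; left.
apply: (Hgen _ _ pK pN) => x.
set S := gen (fun y => K y \/ N y).
have sS : sgrp S by apply: gen_sgrp.
pose T := fun b : A => exists s, S s /\ b = pi s.
have sT : AbsPart.subgr T.
  split; first by exists one; split; [exact: sS.1 | by []].
  move=> _ _ [s [Ss ->]] [t [St ->]]; exists (mul s (inv t)); split.
    by apply: sS.2.1 => //; apply: sS.2.2.
  by rewrite piD piV.
have Ta : T a by exists g; split; [apply: gen_in; left; apply: gen_in | rewrite eg].
have [z ez] := allc (pi x).
have [s [Ss es]] : T (pi x) by rewrite ez; apply: AbsPart.subgrMz.
apply: (@Sfill _ s) => //.
by move=> n Nn; apply: gen_in; right.
Qed.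

End Main.

Theorem mainTheorem9 (G : Type) (mul : G -> G -> G) (one : G) (inv : G -> G)
  (HG : group_axioms mul one inv)
  (Hsol : soluble mul one inv)
  (Hnfg : ~ finitely_generated mul one inv)
  (Hgen : forall K L : G -> Prop,
      proper_subgroup mul one inv K -> proper_subgroup mul one inv L ->
      ~ (forall x, gen mul one inv (fun y => K y \/ L y) x)) :
  exists p : nat, prime p /\ abelianization_quasicyclic mul one inv p.
Proof.
have [x0 nx0] := @Nproper G mul one inv Hsol Hnfg.
have NT : exists a : Q HG, a <> 0%R.
  by exists (pi HG x0) => /(pi0 HG).
have [p [phi [pp [hadd [hpad [hsurj hker]]]]]] :=
  abs_main (@QHP _ _ _ _ HG Hgen) (@QNC _ _ _ _ HG Hsol Hnfg Hgen) NT.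
exists p; split => //.
exists (fun x => phi (pi HG x)); split; [|split; [|split]].
- by move=> x y; rewrite (piD HG); exact: hadd.
- by move=> x; exact: hpad.
- move=> q hq; have [a ha] := hsurj q hq; have [x ex] := pi_surj a.
  by exists x; rewrite -ex.
- move=> x; rewrite /rat_is_int hker; exact: pi0.
Qed.
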